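(* Let $S$ be a closed connected oriented surface of genus $n\ge2$ and let $\chi\in H^1(S,\mathbb C)$ satisfy $\chi(H_1(S,\mathbb Z))=\mathbb Z+i\mathbb Z$ and $\omega(\chi)>0$. Then there is a symplectic basis $x_1,y_1,\dots,x_n,y_n$ of $H_1(S,\mathbb Z)$ such that $\chi(x_1)=\omega(\chi)$, $\chi(y_1)=i$, and for every $j=2,\dots,n$: $\chi(y_j)=0$ and $\chi(x_j)=a_j$ with $a_j$ an integer satisfying $0\le a_j<\omega(\chi)$.
   Context: A symplectic basis of $H_1(S,\mathbb Z)$ is a basis with intersection numbers $x_i\cdot y_j=\delta_{ij}$, $x_i\cdot x_j=y_i\cdot y_j=0$. $\omega(\chi):=\sum_{j=1}^n\mathrm{Im}(\overline{\chi(x_j)}\chi(y_j))$ for any symplectic basis (independent of the choice). *)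

(* Defs.v *)
From HB Require Import structures.
From mathcomp Require Import all_boot all_order all_algebra all_field.
Set Implicit Arguments. Unset Strict Implicit. Unset Printing Implicit Defensive.
Import Order.TTheory GRing.Theory Num.Theory.
Local Open Scope ring_scope.

(* Model of H_1(S,Z) for a closed connected oriented surface of genus n:
   the lattice Z^n x Z^n, where (u.1, u.2) are the coordinates with respect
   to a fixed (standard) symplectic basis e_1,f_1,...,e_n,f_n. *)
Definition H1 (n : nat) := ('rV[int]_n * 'rV[int]_n)%type.

Definition stdx (n : nat) (j : 'I_n) : H1 n := (\row_k ((k == j)%:R : int), 0).
Definition stdy (n : nat) (j : 'I_n) : H1 n := (0, \row_k ((k == j)%:R : int)).

Definition inter (n : nat) (u v : H1 n) : int :=
  \sum_(i < n) (u.1 0 i * v.2 0 i - u.2 0 i * v.1 0 i).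

Definition is_Zbasis (n : nat) (x y : 'I_n -> H1 n) : Prop :=
  forall v : H1 n, exists! c : 'rV[int]_n * 'rV[int]_n,
    v = \sum_(i < n) (x i *~ c.1 0 i + y i *~ c.2 0 i).

Definition is_symplectic_basis (n : nat) (x y : 'I_n -> H1 n) : Prop :=
  is_Zbasis x y /\
  (forall i j : 'I_n,
     inter (x i) (y j) = (i == j)%:R /\ inter (x i) (x j) = 0 /\
     inter (y i) (y j) = 0).

(* omega(chi) computed on the standard symplectic basis (it is independent of
   the symplectic basis). *)
Definition omega (n : nat) (chi : H1 n -> algC) : algC :=
  \sum_(j < n) 'Im ((chi (stdx j))^* * chi (stdy j)).

(* Main.v *)
Require Import Defs.
From HB Require Import structures.
From mathcomp Require Import all_boot all_order all_algebra all_field ring.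
Import Order.TTheory GRing.Theory Num.Theory.
Local Open Scope ring_scope.

Section Sp.
Variable n : nat.
Local Notation M2 := ('M[int]_(n+n)).

Definition Jm : M2 := block_mx 0 1%:M (-1%:M) 0.

Lemma JJ : Jm *m Jm = -1%:M.
Proof.
rewrite /Jm mulmx_block !mulmx0 !mul0mx !mulmx1 !mul1mx !add0r !addr0.
have -> : (1%:M : M2) = block_mx 1%:M 0 0 1%:M by exact: scalar_mx_block.
by rewrite opp_block_mx oppr0.
Qed.

Lemma trJ : Jm^T = - Jm.
Proof.
rewrite /Jm tr_block_mx !trmx0 trmx1 linearN /= trmx1.
by rewrite opp_block_mx !oppr0 opprK.
Qed.

Definition spc (M : M2) := M^T *m Jm *m M = Jm.

Lemma spc_mul M N : spc M -> spc N -> spc (M *m N).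
Proof.
rewrite /spc trmx_mul => hM hN.
have -> : N^T *m M^T *m Jm *m (M *m N) = N^T *m (M^T *m Jm *m M) *m N
  by rewrite !mulmxA.
by rewrite hM.
Qed.

Lemma spc_linv M : spc M -> (- (Jm *m M^T *m Jm)) *m M = 1%:M.
Proof.
move=> hM; rewrite mulNmx.
have -> : Jm *m M^T *m Jm *m M = Jm *m (M^T *m Jm *m M) by rewrite !mulmxA.
by rewrite hM JJ opprK.
Qed.

Lemma spc_unit M : spc M -> M \in unitmx.
Proof. by move=> /spc_linv /mulmx1_unit []. Qed.

Lemma spc_row M : spc M -> M *m Jm *m M^T = Jm.
Proof.
move=> /spc_linv /mulmx1C; rewrite mulmxN -!mulmxA => h.
have h' : M *m (Jm *m (M^T *m Jm)) = - 1%:M by rewrite -h opprK.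
have : M *m (Jm *m (M^T *m Jm)) *m Jm = - 1%:M *m Jm by rewrite h'.
rewrite -!mulmxA JJ !mulmxN mulmx1 mulNmx mul1mx => /eqP.
by rewrite eqr_opp !mulmxA => /eqP.
Qed.

End Sp.
Arguments Jm {n}.
Arguments spc {n}.


Section Elem.
Variable n : nat.
Local Notation M2 := ('M[int]_(n+n)).

Definition dg (f : 'I_n -> int) : 'M[int]_n := diag_mx (\row_i f i).

Lemma dg_mul f g : dg f *m dg g = dg (fun i => f i * g i).
Proof.
apply/matrixP => i j; rewrite mul_diag_mx !mxE.
by rewrite mulrnAr.
Qed.

Lemma dg_tr f : (dg f)^T = dg f.
Proof. exact: tr_diag_mx. Qed.

Definition Hm (a b c d : 'I_n -> int) : M2 :=
  block_mx (dg a) (dg b) (dg c) (dg d).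

Lemma Hm_spc a b c d : (forall i, a i * d i - b i * c i = 1) ->
  spc (Hm a b c d).
Proof.
move=> h; rewrite /spc /Hm /Jm tr_block_mx !dg_tr !mulmx_block.
rewrite !mulmx0 !mulmx1 !mulmxN !mulmx1 !addr0 !add0r !mulNmx !dg_mul.
have -> : (1%:M : 'M[int]_n) = dg (fun i => a i * d i - b i * c i).
  by apply/matrixP => i j; rewrite !mxE h.
congr block_mx; apply/matrixP => i j; rewrite !mxE;
  case: (i == j); rewrite ?mulr1n ?mulr0n ?oppr0 ?addr0 //; ring.
Qed.



Lemma Hm_col a b c d (X Y : 'cV[int]_n) :
  Hm a b c d *m col_mx X Y =
  col_mx (\col_i (a i * X i 0 + b i * Y i 0)) (\col_i (c i * X i 0 + d i * Y i 0)).
Proof.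
rewrite /Hm mul_block_col !mul_diag_mx.
by congr col_mx; apply/matrixP => i j; rewrite !mxE (ord1 j).
Qed.

Definition Lm (S : 'M[int]_n) : M2 := block_mx 1%:M 0 S 1%:M.

Lemma Lm_spc S : S^T = S -> spc (Lm S).
Proof.
move=> hS; rewrite /spc /Lm /Jm tr_block_mx hS trmx0 trmx1 !mulmx_block.
rewrite !mulmx0 !mul0mx !mulmx1 !mul1mx !mulmxN !mulmx1 !addr0 !add0r.
by rewrite mul1mx mul0mx addr0 addNr.
Qed.

Lemma Lm_col S (X Y : 'cV[int]_n) : Lm S *m col_mx X Y = col_mx X (S *m X + Y).
Proof. by rewrite /Lm mul_block_col !mul1mx mul0mx addr0. Qed.

Definition Gm (A B : 'M[int]_n) : M2 := block_mx A 0 0 B.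

Lemma Gm_spc A B : A^T *m B = 1%:M -> spc (Gm A B).
Proof.
move=> h; rewrite /spc /Gm /Jm tr_block_mx !trmx0 !mulmx_block.
rewrite !mulmx0 !mul0mx !mulmx1 !mulmxN !mulmx1 !addr0 !add0r !mul0mx h mulNmx.
have -> : B^T *m A = 1%:M by rewrite -[A]trmxK -trmx_mul h trmx1.
by [].
Qed.

Lemma Gm_col A B (X Y : 'cV[int]_n) : Gm A B *m col_mx X Y = col_mx (A *m X) (B *m Y).
Proof. by rewrite /Gm mul_block_col !mul0mx addr0 add0r. Qed.

Lemma iso (x : 'cV[int]_(n+n)) : x^T *m Jm *m x = 0.
Proof.
set s := x^T *m Jm *m x.
have hs : s^T = - s by rewrite /s !trmx_mul trmxK trJ mulNmx mulmxN mulmxA.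
have z : s 0 0 = 0.
  have e : s^T 0 0 = s 0 0 by rewrite mxE.
  rewrite hs mxE in e.
  have : s 0 0 *+ 2 == 0 by rewrite mulr2n -{1}e addNr.
  by rewrite mulrn_eq0 /= => /eqP.
by apply/matrixP => i j; rewrite !ord1 z mxE.
Qed.

Definition tv (w : 'cV[int]_(n+n)) : M2 := 1%:M - w *m (w^T *m Jm).

Lemma tv_spc w : spc (tv w).
Proof.
rewrite /spc /tv.
have -> : (1%:M - w *m (w^T *m Jm))^T = 1%:M + Jm *m w *m w^T.
  by rewrite linearB /= trmx1 !trmx_mul trmxK trJ !mulNmx opprK.
rewrite mulmxDl mul1mx mulmxBr mulmx1 mulmxDl.
have -> : Jm *m w *m w^T *m Jm *m (w *m (w^T *m Jm))
   = Jm *m w *m (w^T *m Jm *m w) *m (w^T *m Jm) by rewrite !mulmxA.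
rewrite iso mulmx0 mul0mx addr0 !mulmxA.
by rewrite addrK.
Qed.

Lemma tv_apply (u v : 'cV[int]_(n+n)) : u^T *m Jm *m v = 1%:M ->
  tv (v - u) *m u = v.
Proof.
move=> h.
have e : v^T *m Jm *m u = - 1%:M.
  have := congr1 trmx h; rewrite !trmx_mul trmxK trJ trmx1 mulNmx mulmxN mulmxA.
  by move=> <-; rewrite opprK.
rewrite /tv mulmxBl mul1mx -!mulmxA.
have -> : (v - u)^T *m (Jm *m u) = - 1%:M.
  by rewrite linearB /= mulmxBl !mulmxA iso subr0 e.
by rewrite mulmxN mulmx1 opprK addrC subrK.
Qed.
End Elem.
Arguments dg {n}. Arguments Hm {n}. Arguments Lm {n}. Arguments Gm {n}. Arguments tv {n}.


Definition kfun (x y : int) : int * int * int * int :=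
  let g := gcdz x y in
  if g == 0 then (1, 0, 0, 1) else
  let: (u, v) := egcdz x y in (u, v, - (y %/ g)%Z, (x %/ g)%Z).

Lemma kfunP x y : let: (a, b, c, d) := kfun x y in
  a * d - b * c = 1 /\ c * x + d * y = 0.
Proof.
rewrite /kfun; case: ifP => [|g0].
  by rewrite gcdz_eq0 => /andP [/eqP -> /eqP ->]; split; ring.
case: egcdzP => u v huv _.
set g := gcdz x y in huv g0 *.
have gx : ((x %/ g)%Z * g = x) by apply: divzK; exact: dvdz_gcdl.
have gy : ((y %/ g)%Z * g = y) by apply: divzK; exact: dvdz_gcdr.
have gn0 : g != 0 by rewrite g0.
split.
  apply: (mulIf gn0); rewrite mul1r.
  transitivity (u * ((x %/ g)%Z * g) + v * ((y %/ g)%Z * g)); first ring.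
  by rewrite gx gy.
transitivity (- (y %/ g)%Z * ((x %/ g)%Z * g) + (x %/ g)%Z * ((y %/ g)%Z * g)).
  by rewrite gx gy.
ring.
Qed.

Lemma Hkill n (msk : 'I_n -> bool) (X Y : 'cV[int]_n) :
  exists a b c d : 'I_n -> int,
  [/\ forall i, a i * d i - b i * c i = 1,
      forall i, ~~ msk i -> [/\ a i = 1, b i = 0, c i = 0 & d i = 1] &
      forall i, msk i -> c i * X i 0 + d i * Y i 0 = 0].
Proof.
pose q i := if msk i then kfun (X i 0) (Y i 0) else (1, 0, 0, 1).
exists (fun i => (q i).1.1.1), (fun i => (q i).1.1.2), (fun i => (q i).1.2),
  (fun i => (q i).2).
split => i; rewrite /q.
- case: (msk i); last by rewrite /= mulr1 mulr0 subr0.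
  by have := kfunP (X i 0) (Y i 0); case: kfun => [[[a b] c] d] /= [].
- by move/negbTE => ->.
- move=> ->; have := kfunP (X i 0) (Y i 0); case: kfun => [[[a b] c] d] /= [].
  by [].
Qed.


Section Core.
Variable m : nat.
Local Notation n := m.+1.
Local Notation V := ('cV[int]_(n+n)).
Definition e0 : 'cV[int]_n := delta_mx 0 0.
Definition ey : V := col_mx 0 e0.

Lemma mulmx_e0 p (A : 'M[int]_(p, n)) i j : (A *m e0) i j = A i 0.
Proof.
rewrite !mxE (bigD1 ord0) //= big1 ?addr0.
  by rewrite /e0 !mxE (ord1 j) !eqxx /= mulr1.
by move=> k /negbTE hk; rewrite /e0 !mxE hk /= mulr0.
Qed.

Lemma e0T_mulmx p (A : 'M[int]_(n, p)) i j : (e0^T *m A) i j = A 0 j.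
Proof.
rewrite !mxE (bigD1 ord0) //= big1 ?addr0.
  by rewrite /e0 !mxE (ord1 i) !eqxx /= mul1r.
by move=> k /negbTE hk; rewrite /e0 !mxE hk /= mul0r.
Qed.

Lemma e0T_e0 : e0^T *m e0 = 1%:M.
Proof. by apply/matrixP => i j; rewrite !ord1 e0T_mulmx !mxE. Qed.

Definition om (P Q : V) := (P^T *m Jm *m Q) 0 0.

Lemma om_tr N P Q : spc N -> om (N *m P) (N *m Q) = om P Q.
Proof.
rewrite /om /spc trmx_mul => h.
have -> : P^T *m N^T *m Jm *m (N *m Q) = P^T *m (N^T *m Jm *m N) *m Q
  by rewrite !mulmxA.
by rewrite h.
Qed.

Lemma Jform (X1 Y1 X2 Y2 : 'cV[int]_n) :
  (col_mx X1 Y1)^T *m Jm *m col_mx X2 Y2 = X1^T *m Y2 - Y1^T *m X2.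
Proof.
rewrite tr_col_mx -mulmxA /Jm mul_block_col !mul0mx !mul1mx add0r addr0.
by rewrite mul_row_col mulNmx mul1mx mulmxN.
Qed.

Lemma om_ey (P : V) : om P ey = P (lshift n 0) 0.
Proof.
rewrite /om -[P]vsubmxK /ey Jform mulmx0 subr0 mulmx_e0 mxE.
by rewrite col_mxEu.
Qed.

Definition surj (P Q : V) :=
  (exists c : 'rV[int]_(n+n), c *m P = 1%:M /\ c *m Q = 0) /\
  (exists c : 'rV[int]_(n+n), c *m P = 0 /\ c *m Q = 1%:M).

Lemma surj_tr N P Q : spc N -> surj P Q -> surj (N *m P) (N *m Q).
Proof.
move=> /spc_unit hN [[c [h1 h2]] [c' [h1' h2']]]; split.
  by exists (c *m invmx N); rewrite !mulmxA !mulmxKV.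
by exists (c' *m invmx N); rewrite !mulmxA !mulmxKV.
Qed.

Definition Final (P Q : V) := exists M, spc M /\ M *m Q = ey /\
  (forall j, (M *m P) (rshift n j) 0 = 0) /\
  (forall j : 'I_n, j != 0 -> 0 <= (M *m P) (lshift n j) 0 < om P Q).

Lemma Final_tr N P Q : spc N -> Final (N *m P) (N *m Q) -> Final P Q.
Proof.
move=> hN [M [hM [hQ [hP1 hP2]]]]; exists (M *m N); split.
  exact: spc_mul.
rewrite -!mulmxA hQ; split=> //; split=> //.
by move=> j /hP2; rewrite om_tr.
Qed.


Lemma L6 (X : 'cV[int]_n) : 0 < X 0 0 -> Final (col_mx X 0) ey.
Proof.
move=> hX.
pose kk : 'cV[int]_n := \col_i (if i == 0 then 0 else - divz (X i 0) (X 0 0)).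
have k0 : kk^T *m e0 = 0.
  by apply/matrixP => i j; rewrite !ord1 mulmx_e0 !mxE eqxx.
pose A := 1%:M + kk *m e0^T.
pose B := 1%:M - e0 *m kk^T.
have hAB : A^T *m B = 1%:M.
  have -> : A^T = 1%:M + e0 *m kk^T by rewrite /A linearD /= trmx1 trmx_mul trmxK.
  rewrite /B mulmxDl mul1mx mulmxBr mulmx1.
  rewrite -!mulmxA (mulmxA kk^T) k0 mul0mx mulmx0 subr0.
  by rewrite subrK.
rewrite /Final om_ey col_mxEu.
exists (Gm A B); split; first exact: Gm_spc.
rewrite /ey !Gm_col !mulmx0 /B mulmxBl mul1mx -mulmxA k0 mulmx0 subr0.
split=> //; split.
  by move=> j; rewrite col_mxEd mxE.
move=> j hj; rewrite col_mxEu /A mulmxDl mul1mx -mulmxA.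
rewrite mxE [(kk *m _) j 0]mxE big_ord1 e0T_mulmx !mxE (negbTE hj).
have hX0 : X 0 0 != 0 by rewrite gt_eqF.
have -> : X j 0 + - divz (X j 0) (X 0 0) * X 0 0 = modz (X j 0) (X 0 0).
  by rewrite {1}(divz_eq (X j 0) (X 0 0)) mulNr addrAC subrr add0r.
rewrite modz_ge0 //= -[X in _ < X]gtr0_norm //.
exact: ltz_mod.
Qed.


Lemma Hm_ey a b c d : ~~ ((0 : 'I_n) != 0) -> a 0 = 1 /\ b 0 = 0 /\ c 0 = 0 /\ d 0 = 1 ->
  Hm a b c d *m ey = ey.
Proof.
move=> _ [h1 [h2 [h3 h4]]]; rewrite /ey Hm_col; congr col_mx;
  apply/matrixP => i j; rewrite /e0 !mxE ?(ord1 j) /=; case: (eqVneq i 0) => [->|hi].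
- by rewrite h2 !mulr0 addr0.
- by rewrite /= !mulr0 addr0.
- by rewrite /= mulr0 add0r mulr1; exact: h4.
- by rewrite /= !mulr0 addr0.
Qed.

Lemma L5 (X Y : 'cV[int]_n) : Y 0 0 = 0 -> 0 < X 0 0 -> Final (col_mx X Y) ey.
Proof.
move=> hY hX.
have [a [b [c [d [hdet hid hk]]]]] := @Hkill _ (fun i : 'I_n => i != 0) X Y.
have [h1 h2 h3 h4] : [/\ a 0 = 1, b 0 = 0, c 0 = 0 & d 0 = 1].
  by apply: hid; rewrite eqxx.
apply: (Final_tr (Hm a b c d)); first exact: Hm_spc.
rewrite Hm_ey; [| by rewrite eqxx | by do !split].

rewrite Hm_col.
have -> : \col_i (c i * X i 0 + d i * Y i 0) = 0.
  apply/matrixP => i j; rewrite !mxE ?(ord1 j); case: (eqVneq i 0) => [->|hi].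
    by rewrite h3 h4 hY mul0r mulr0 addr0.
  exact: hk.
by apply: L6; rewrite mxE h1 h2 hY mul1r mul0r addr0.
Qed.


Lemma L4 (X Y : 'cV[int]_n) : (forall j, j != 0 -> Y j 0 = 0) ->
  surj (col_mx X Y) ey -> 0 < X 0 0 -> Final (col_mx X Y) ey.
Proof.
move=> hY [[c [hc1 hc2]] _] hX.
rewrite -(hsubmxK c) in hc1 hc2.
set c1 := lsubmx c in hc1 hc2; set c2 := rsubmx c in hc1 hc2.
have e2 : c2 0 0 = 0.
  move: hc2; rewrite /ey mul_row_col mulmx0 add0r => /matrixP /(_ 0 0).
  by rewrite mulmx_e0 [in RHS]mxE.
have z : (c2 *m Y) 0 0 = 0.
  rewrite mxE big1 //.
  move=> j _; case: (eqVneq j 0) => [->|hj]; first by rewrite e2 mul0r.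
  by rewrite hY // mulr0.
have e1 : (c1 *m X) 0 0 = 1.
  have := congr1 (fun M : 'M[int]_1 => M 0 0) hc1; rewrite /= mul_row_col.
  by rewrite [X in X = _ -> _]mxE [X in _ = X -> _]mxE z addr0 => ->.
pose r (j : 'I_n) := - Y 0 0 * c1 0 j.
pose S : 'M[int]_n := \matrix_(i, j) if i == 0 then r j else if j == 0 then r i else 0.
have hS : S^T = S.
  apply/matrixP => i j; rewrite !mxE.
  by case hi: (i == 0); case hj: (j == 0) => //=; rewrite (eqP hi) (eqP hj).
apply: (Final_tr (Lm S)); first exact: Lm_spc.
have -> : Lm S *m ey = ey by rewrite /ey Lm_col mulmx0 add0r.
rewrite Lm_col; apply: L5 => //.
rewrite mxE [(S *m X) 0 0]mxE.
have -> : \sum_j S 0 j * X j 0 = - Y 0 0 * (c1 *m X) 0 0.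
  rewrite [(c1 *m X) 0 0]mxE mulr_sumr; apply: eq_bigr => j _.
  by rewrite /S mxE eqxx /r mulrA.
move: e1; set t := (c1 *m X) 0 0 => e1.

by rewrite e1 mulr1 addNr.
Qed.


Lemma L3 (P : V) : surj P ey -> 0 < om P ey -> Final P ey.
Proof.
rewrite -[P]vsubmxK; set X := usubmx P; set Y := dsubmx P => hs hw.
rewrite om_ey col_mxEu in hw.
have [a [b [c [d [hdet hid hk]]]]] := @Hkill _ (fun i : 'I_n => i != 0) X Y.
have [h1 h2 h3 h4] : [/\ a 0 = 1, b 0 = 0, c 0 = 0 & d 0 = 1].
  by apply: hid; rewrite eqxx.
have hN := @Hm_spc _ _ _ _ _ hdet.
have hey : Hm a b c d *m ey = ey.
  by rewrite Hm_ey; [| by rewrite eqxx | by do !split].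
apply: (Final_tr _ _ _ hN).
have hs' := surj_tr _ _ _ hN hs.
rewrite hey Hm_col in hs' *.
apply: L4 => //.
  by move=> j hj; rewrite mxE; apply: hk.
by rewrite mxE h1 h2 mul1r mul0r addr0.
Qed.


Lemma L1 (P Q : V) : surj P Q -> 0 < om P Q -> Final P Q.
Proof.
move=> hs hw.
have [a [b [c [d [hdet _ hk]]]]] :=
  @Hkill _ (fun _ : 'I_n => true) (usubmx Q) (dsubmx Q).
have hN := @Hm_spc _ _ _ _ _ hdet.
set G : 'cV[int]_n := \col_i (a i * usubmx Q i 0 + b i * dsubmx Q i 0).
have hQ1 : Hm a b c d *m Q = col_mx G 0.
  rewrite -{1}[Q]vsubmxK Hm_col; congr col_mx.
  by apply/matrixP => i j; rewrite [LHS]mxE [RHS]mxE; apply: hk.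
have hs1 := surj_tr _ _ _ hN hs; rewrite hQ1 in hs1.
have hw1 : 0 < om (Hm a b c d *m P) (col_mx G 0) by rewrite -hQ1 om_tr.
apply: (Final_tr _ _ _ hN); rewrite hQ1.
move: hs1 hw1; set P1 := Hm a b c d *m P => hs1 hw1.
have [_ [cc [_ hcc]]] := hs1.
rewrite -(hsubmxK cc) mul_row_col mulmx0 addr0 in hcc.
set c1 := lsubmx cc in hcc; set c2 := rsubmx cc.
pose u : V := col_mx G 0.
pose v : V := col_mx ((1 + c2 0 0) *: e0 - c2^T) c1^T.
have huv : u^T *m Jm *m v = 1%:M.
  by rewrite /u /v Jform trmx0 mul0mx subr0 -trmx_mul hcc trmx1.
have hvey : v^T *m Jm *m ey = 1%:M.
  rewrite /v /ey Jform mulmx0 subr0.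
  apply/matrixP => i j; rewrite !ord1 mulmx_e0 /e0 !mxE eqxx /=.
  by rewrite mulr1 addrK.
have h1 := @tv_spc _ (v - u); have h2 := @tv_spc _ (ey - v).
apply: (Final_tr _ _ _ h1); rewrite (tv_apply _ _ _ huv).
apply: (Final_tr _ _ _ h2); rewrite (tv_apply _ _ _ hvey).
have e : tv (ey - v) *m (tv (v - u) *m u) = ey.
  by rewrite (tv_apply _ _ _ huv) (tv_apply _ _ _ hvey).
apply: L3.
  by rewrite -[X in surj _ X]e; apply: surj_tr => //; apply: surj_tr.
by rewrite -[X in om _ X]e !om_tr.
Qed.

End Core.
Arguments om {m}. Arguments surj {m}. Arguments Final {m}. Arguments ey {m}. Arguments e0 {m}.


Definition unemb {n} (r : 'rV[int]_(n+n)) : H1 n := (lsubmx r, rsubmx r).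
Lemma unembB n : zmod_morphism (@unemb n).
Proof. by move=> a b; rewrite /unemb !linearB. Qed.
HB.instance Definition _ n := GRing.isZmodMorphism.Build _ _ (@unemb n) (@unembB n).

Definition emb {n} (v : H1 n) : 'rV[int]_(n+n) := row_mx v.1 v.2.
Lemma embK n (v : H1 n) : unemb (emb v) = v.
Proof. by case: v => a b; rewrite /unemb /emb row_mxKl row_mxKr. Qed.
Lemma unembK n (r : 'rV[int]_(n+n)) : emb (unemb r) = r.
Proof. by rewrite /unemb /emb hsubmxK. Qed.

Lemma intr_sum (I : finType) (F : I -> int) :
  ((\sum_i F i)%:~R : algC) = \sum_i (F i)%:~R.
Proof. by rewrite (big_morph _ (intrD _) (mulr0z 1)). Qed.

Lemma scale_int k (a : int) (v : 'rV[int]_k) : a *: v = v *~ a.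
Proof. by rewrite -scaler_int intz. Qed.

Lemma rect_inj (a b c d : int) :
  (a%:~R + 'i * b%:~R : algC) = c%:~R + 'i * d%:~R -> a = c /\ b = d.
Proof.
move=> h; have hr := congr1 (fun z => 'Re z) h; have hi := congr1 (fun z => 'Im z) h.
rewrite /= !Re_rect ?realz // in hr; rewrite /= !Im_rect ?realz // in hi.
by split; apply/eqP; rewrite -(eqr_int algC) ?hr ?hi.
Qed.

Lemma Jrow n (a b : 'rV[int]_n) (X Y : 'cV[int]_n) :
  row_mx a b *m Jm *m col_mx X Y = a *m Y - b *m X.
Proof.
rewrite -mulmxA /Jm mul_block_col !mul0mx !mul1mx add0r addr0.
by rewrite mul_row_col mulNmx mul1mx mulmxN.
Qed.

Lemma inter_unemb n (r s : 'rV[int]_(n+n)) :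
  inter (unemb r) (unemb s) = (r *m Jm *m s^T) 0 0.
Proof.
rewrite -{2}(hsubmxK r) -{2}(hsubmxK s) tr_row_mx Jrow.
rewrite /inter /unemb /= [RHS]mxE !mxE -sumrB.
by apply: eq_bigr => i _; rewrite !mxE.
Qed.

Lemma row_entry p q k (A : 'M[int]_(p, q)) (B : 'M[int]_q) (C : 'M[int]_(k, q)) a b :
  (row a A *m B *m (row b C)^T) 0 0 = (A *m B *m C^T) a b.
Proof.
rewrite !mxE; apply: eq_bigr => l _; rewrite !mxE; congr (_ * _).
by apply: eq_bigr => t _; rewrite !mxE.
Qed.

Lemma chi_unemb n (chi : {additive H1 n -> algC}) (r : 'rV[int]_(n+n)) :
  chi (unemb r) = \sum_k (r 0 k)%:~R * chi (unemb (delta_mx 0 k)).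
Proof.
rewrite {1}(row_sum_delta r) !raddf_sum; apply: eq_bigr => k _.
by rewrite scale_int !raddfMz mulrzl.
Qed.

Lemma chi_PQ n (chi : {additive H1 n -> algC}) (P Q : 'cV[int]_(n+n)) :
  (forall k, chi (unemb (delta_mx 0 k)) = (P k 0)%:~R + 'i * (Q k 0)%:~R) ->
  forall r, chi (unemb r) = ((r *m P) 0 0)%:~R + 'i * ((r *m Q) 0 0)%:~R.
Proof.
move=> h r; rewrite chi_unemb !mxE !intr_sum mulr_sumr -big_split.
by apply: eq_bigr => k _; rewrite h !intrM mulrDr mulrCA.
Qed.

Lemma conj_mul (x y u v : algC) :
  (x - 'i * y) * (u + 'i * v) = (x * u + y * v) + 'i * (x * v - y * u).
Proof.
transitivity (x * u + 'i * (x * v - y * u) - 'i ^+ 2 * (y * v)); first ring.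
rewrite sqrCi; ring.
Qed.

Lemma stdxE n (j : 'I_n) : stdx j = unemb (delta_mx 0 (lshift n j)).
Proof.
rewrite /stdx /unemb; congr pair; apply/matrixP => a b; rewrite !mxE.
  by rewrite (ord1 a) eqxx eq_lshift.
by rewrite (ord1 a) eqxx eq_rlshift.
Qed.

Lemma stdyE n (j : 'I_n) : stdy j = unemb (delta_mx 0 (rshift n j)).
Proof.
rewrite /stdy /unemb; congr pair; apply/matrixP => a b; rewrite !mxE.
  by rewrite (ord1 a) eqxx eq_lrshift.
by rewrite (ord1 a) eqxx eq_rshift.
Qed.


Theorem mainTheorem14 (n : nat) (hn : (2 <= n)%N)
  (chi : {additive H1 n -> algC})
  (himg : forall z : algC,
      (exists v : H1 n, chi v = z) <->
      (exists a b : int, z = a%:~R + 'i * b%:~R))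
  (hom : 0 < omega chi) :
  exists x y : 'I_n -> H1 n,
    is_symplectic_basis x y /\
    (forall j : 'I_n, nat_of_ord j = 0%N ->
        chi (x j) = omega chi /\ chi (y j) = 'i) /\
    (forall j : 'I_n, (0 < nat_of_ord j)%N ->
        chi (y j) = 0 /\
        exists a : int, chi (x j) = a%:~R /\ 0 <= a /\ a%:~R < omega chi).
Proof.
case: n hn chi himg hom => [//|m] hn chi himg hom.
pose g k := chi (unemb (delta_mx 0 k : 'rV[int]_(m.+1 + m.+1))).
have hg k : exists a b : int, g k = a%:~R + 'i * b%:~R.
  by apply/himg; exists (unemb (delta_mx 0 k)).
pose P : 'cV[int]_(m.+1 + m.+1) := \col_k Num.floor ('Re (g k)).
pose Q : 'cV[int]_(m.+1 + m.+1) := \col_k Num.floor ('Im (g k)).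
have hPQ k : g k = (P k 0)%:~R + 'i * (Q k 0)%:~R.
  have [a [b hab]] := hg k.
  by rewrite !mxE hab Re_rect ?realz // Im_rect ?realz // !intrKfloor.
have hchi := @chi_PQ _ chi P Q hPQ.
have hom' : omega chi = (om P Q)%:~R.
  rewrite /omega /om -[P]vsubmxK -[Q]vsubmxK Jform.
  have -> : ((usubmx P)^T *m dsubmx Q - (dsubmx P)^T *m usubmx Q) 0 0 =
     \sum_j (P (lshift _ j) 0 * Q (rshift _ j) 0 - P (rshift _ j) 0 * Q (lshift _ j) 0).
    by rewrite !mxE -sumrB; apply: eq_bigr => j _; rewrite !mxE.
  rewrite intr_sum; apply: eq_bigr => j _.
  have hPQ' k : chi (unemb (delta_mx 0 k)) = (P k 0)%:~R + 'i * (Q k 0)%:~R := hPQ k.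
  rewrite stdxE stdyE !hPQ' conjC_rect ?realz // conj_mul.
  rewrite -!intrM -intrD -intrB Im_rect ?realz //.
  by rewrite [Q (lshift _ j) 0 * _]mulrC.
have hw : 0 < om P Q by rewrite -(ltr0z algC) -hom'.
have hs : surj P Q.
  split.
    have [v hv] : exists v, chi v = 1.
      by apply/himg; exists 1, 0; rewrite mulr0 addr0.
    rewrite -(embK _ v) hchi in hv.
    have [e1 e2] : ((emb v *m P) 0 0 = 1) /\ ((emb v *m Q) 0 0 = 0).
      by apply: rect_inj; rewrite hv mulr0 addr0.
    exists (emb v); split; apply/matrixP => i j; rewrite !ord1 ?e1 ?e2 mxE //.
  have [v hv] : exists v, chi v = 'i.
    by apply/himg; exists 0, 1; rewrite mulr1 add0r.
  rewrite -(embK _ v) hchi in hv.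
  have [e1 e2] : ((emb v *m P) 0 0 = 0) /\ ((emb v *m Q) 0 0 = 1).
    by apply: rect_inj; rewrite hv mulr1 add0r.
  exists (emb v); split; apply/matrixP => i j; rewrite !ord1 ?e1 ?e2 mxE //.
have [M [hM [hMQ [hMP1 hMP2]]]] := @L1 m P Q hs hw.
have hMu := @spc_unit _ M hM.
have hrow k : chi (unemb (row k M)) = ((M *m P) k 0)%:~R + 'i * ((M *m Q) k 0)%:~R.
  by rewrite hchi -!row_mul !mxE.
have hMP0 : (M *m P) (lshift _ 0) 0 = om P Q.
  by rewrite -(om_tr _ M P Q hM) hMQ om_ey.
have hQl j : (M *m Q) (lshift _ j) 0 = 0 by rewrite hMQ /ey col_mxEu mxE.
have hQr j : (M *m Q) (rshift _ j) 0 = (j == 0)%:R.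
  by rewrite hMQ /ey col_mxEd /e0 mxE eqxx andbT.
exists (fun i => unemb (row (lshift _ i) M)), (fun i => unemb (row (rshift _ i) M)).
split; [split|split].
- move=> v.
  have key (c1 c2 : 'rV[int]_m.+1) :
    \sum_i (unemb (row (lshift _ i) M) *~ c1 0 i + unemb (row (rshift _ i) M) *~ c2 0 i)
    = unemb (row_mx c1 c2 *m M).
    rewrite mulmx_sum_row raddf_sum big_split_ord big_split /=.
    by congr (_ + _); apply: eq_bigr => i _; rewrite ?row_mxEl ?row_mxEr scale_int raddfMz.
  exists (lsubmx (emb v *m invmx M), rsubmx (emb v *m invmx M)); split.
    by rewrite /= key hsubmxK mulmxKV // embK.
  move=> [c1 c2]; rewrite key /= => hv.
  have e : emb v *m invmx M = row_mx c1 c2 by rewrite hv unembK mulmxK.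
  by rewrite e row_mxKl row_mxKr.
- move=> i j; rewrite !inter_unemb !row_entry (@spc_row _ M hM).
  by rewrite /Jm block_mxEur block_mxEul block_mxEdr !mxE.
- move=> j /eqP; rewrite -[_ == _]/(j == ord0 :> 'I__) => /eqP ->.
  rewrite !hrow hMP0 hQl hMP1 hQr hom' eqxx; split.
    by rewrite mulr0 addr0.
  by rewrite add0r mulr1.
- move=> j hj; have hj' : j != 0 by rewrite -(inj_eq val_inj) /= -lt0n.
  rewrite !hrow hMP1 hQl hQr (negbTE hj') mulr0 !addr0; split=> //.
  exists ((M *m P) (lshift _ j) 0); split=> //.
  by have /andP [h1 h2] := hMP2 j hj'; rewrite h1 hom' ltr_int.
Qed.
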